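(* Let $\mathcal{V}$ be a finite vocabulary, $L\ge1$, $\mathbf{m}\notin\mathcal{V}$ a mask token, and $p_{\mathrm{data}}$ a distribution on $\mathcal{V}^L$. Consider a forward masking process of the form $$p(\mathbf{x}_t=\mathbf{z}\mid\mathbf{x}_0,t)=c_t\,\alpha_t(\mathbf{z})\,\mathbf{1}\{\mathbf{x}_0^{\mathrm{um}(\mathbf{z})}=\mathbf{z}^{\mathrm{um}(\mathbf{z})}\},\qquad \mathbf{z}\in(\mathcal{V}\cup\{\mathbf{m}\})^L,$$ where $\alpha_t:(\mathcal{V}\cup\{\mathbf{m}\})^L\to[0,1]$ is a weighting function and $c_t>0$ is a normalizing constant not depending on $\mathbf{x}_0$. Let $p_f$ be the induced joint law of $(\mathbf{x}_0,t,\mathbf{x}_t)$: $\mathbf{x}_0\sim p_{\mathrm{data}}$, $t\sim\mathrm{Unif}[0,1]$, then $\mathbf{x}_t\sim p(\cdot\mid\mathbf{x}_0,t)$. Consider the loss $$\mathcal{L}(f)=\mathbb{E}_{(\mathbf{x}_0,t,\mathbf{x}_t)\sim p_f}\Big[\frac1t\sum_{i:\mathbf{x}_t^i=\mathbf{m}}-\log f^i(\mathbf{x}_0^i\mid\mathbf{x}_t)\Big]$$ over all families $f=(f^i(\cdot\mid\mathbf{z}))_{i\in[L],\mathbf{z}}$ of probability distributions on $\mathcal{V}$. Then any minimizer $f^\star$ equals the ground-truth posterior of $p_{\mathrm{data}}$: for every $i$ and (almost) every $\mathbf{z}$ that occurs with positive probability as $\mathbf{x}_t$ and has $\mathbf{z}^i=\mathbf{m}$,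 $f^{\star i}(\cdot\mid\mathbf{z})=\mathbb{P}(\mathbf{x}_0^i=\cdot\mid\mathbf{x}_t=\mathbf{z})$, and this posterior does not depend on $t$ or $\alpha_t$: $\mathbb{P}(\mathbf{x}_0=\mathbf{x}\mid\mathbf{x}_t=\mathbf{z})\propto \mathbf{1}\{\mathbf{x}^{\mathrm{um}(\mathbf{z})}=\mathbf{z}^{\mathrm{um}(\mathbf{z})}\}\,p_{\mathrm{data}}(\mathbf{x})$.
   Context: For $\mathbf{z}\in(\mathcal{V}\cup\{\mathbf{m}\})^L$, $\mathrm{um}(\mathbf{z}):=\{i:\mathbf{z}^i\neq\mathbf{m}\}$ is the set of unmasked positions, and $\mathbf{x}^{S}$ denotes the restriction of a sequence to the index set $S$. *)

(* Defs.v *)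
From HB Require Import structures.
From mathcomp Require Import all_boot all_order all_algebra.
From mathcomp Require Import all_classical all_reals all_analysis.
Set Implicit Arguments. Unset Strict Implicit. Unset Printing Implicit Defensive.
Import Order.TTheory GRing.Theory Num.Theory.
Local Open Scope ring_scope.

(* Clean sequences: x in V^L.  Masked sequences: z in (V ∪ {m})^L, where
   the mask token m is encoded as [None] and a token v in V as [Some v]. *)
Notation seqV V L := {ffun 'I_L -> V}.
Notation mseq V L := {ffun 'I_L -> option V}.

Definition um (V : finType) (L : nat) (z : mseq V L) : {set 'I_L} :=
  [set i | z i != None].

Definition agree (V : finType) (L : nat) (x : seqV V L) (z : mseq V L) : bool :=
  [forall i in um z, z i == Some (x i)].

Definition isdist (R : realType) (T : finType) (q : T -> R) : Prop :=
  (forall a, 0 <= q a) /\ \sum_(a : T) q a = 1.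

Definition nlog (R : realType) (q : R) : \bar R :=
  if q == 0 then +oo%E else (- ln q)%:E.

Definition joint (R : realType) (V : finType) (L : nat)
  (p : seqV V L -> R) (c : R -> R) (alpha : R -> mseq V L -> R)
  (x : seqV V L) (z : mseq V L) : \bar R :=
  (\int[@lebesgue_measure R]_(t in `[0%R, 1%R]%classic)
     (p x * c t * alpha t z * (agree x z)%:R)%:E)%E.

Definition marg (R : realType) (V : finType) (L : nat)
  (p : seqV V L -> R) (c : R -> R) (alpha : R -> mseq V L -> R)
  (z : mseq V L) : \bar R :=
  (\sum_(x : seqV V L) joint p c alpha x z)%E.

(* The loss  L(f) = E_{p_f}[ (1/t) Σ_{i : x_t^i = m} -log f^i(x_0^i | x_t) ],
   written out as ∫_{[0,1]} Σ_{x0} Σ_z p_data(x0) p(z|x0,t) (...) dt. *)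
Definition loss (R : realType) (V : finType) (L : nat)
  (p : seqV V L -> R) (c : R -> R) (alpha : R -> mseq V L -> R)
  (f : 'I_L -> mseq V L -> V -> R) : \bar R :=
  (\int[@lebesgue_measure R]_(t in `[0%R, 1%R]%classic)
     \sum_(x : seqV V L) \sum_(z : mseq V L)
        ((p x * c t * alpha t z * (agree x z)%:R)%:E *
         ((t^-1)%:E * \sum_(i < L | z i == None) nlog (f i z (x i)))))%E.

(* Main.v *)
Require Import Defs.
From HB Require Import structures.
From mathcomp Require Import all_boot all_order all_algebra.
From mathcomp Require Import all_classical all_reals all_analysis.
From mathcomp Require Import ring lra.
From mathcomp Require Import measurable_realfun.
Import Order.TTheory GRing.Theory Num.Theory.
Local Open Scope ring_scope.
Lemma nlogE (R : realType) (r : R) : r != 0 -> nlog r = (- ln r)%:E.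
Proof. by rewrite /nlog => /negbTE ->. Qed.

Lemma nlog_ge0 (R : realType) (r : R) : r <= 1 -> (0 <= nlog r)%E.
Proof.
rewrite /nlog; case: eqP => // _ r1.
by rewrite lee_fin oppr_ge0 ln_le0.
Qed.

Lemma dist_le1 (R : realType) (T : finType) (q : T -> R) :
  isdist q -> forall a, q a <= 1.
Proof. by move=> [q0 q1] a; rewrite -q1 (bigD1 a) //= lerDl sumr_ge0. Qed.

Lemma gibbs (R : realType) (V : finType) (q f : V -> R) :
  isdist q -> isdist f ->
  (\sum_v (q v)%:E * nlog (f v) <= \sum_v (q v)%:E * nlog (q v))%E ->
  forall v, f v = q v.
Proof.
move=> qd fd H; have [q0 q1] := qd; have [f0 f1] := fd.
pose ent := fun v => if q v == 0 then 0 else q v * - ln (q v).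
have Hent : (\sum_v (q v)%:E * nlog (q v) = (\sum_v ent v)%:E)%E.
  rewrite -sumEFin; apply: eq_bigr => v _; rewrite /ent.
  case: eqP => [->|/eqP qn0]; first by rewrite mul0e.
  by rewrite nlogE // EFinM.
have fpos : forall v, q v != 0 -> f v != 0.
  move=> v qn0; apply/negP => /eqP fv0.
  move: H; rewrite Hent (bigD1 v) //= fv0 [nlog 0]/nlog eqxx.
  rewrite gt0_muley ?lte_fin ?lt_def ?qn0 ?q0 // addye ?leye_eq //.
  apply/negP => /eqP e.
  have : (0 <= \sum_(i | i != v) ((q i)%:E * nlog (f i)))%E.
    apply: sume_ge0 => i _; apply: mule_ge0; first by rewrite lee_fin.
    by apply: nlog_ge0; exact: dist_le1.
  by rewrite e.
pose ce := fun v => if q v == 0 then 0 else q v * - ln (f v).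
have Hce : (\sum_v (q v)%:E * nlog (f v) = (\sum_v ce v)%:E)%E.
  rewrite -sumEFin; apply: eq_bigr => v _; rewrite /ce.
  case: eqP => [->|/eqP qn0]; first by rewrite mul0e.
  by rewrite nlogE ?fpos // EFinM.
move: H; rewrite Hce Hent lee_fin => H.
pose d := fun v => ce v - ent v - (q v - f v).
have d0 : forall v, 0 <= d v.
  move=> v; rewrite /d /ent /ce; case: eqP => [->|/eqP qn0].
    by have := f0 v; lra.
  have qp : 0 < q v by rewrite lt_def qn0 q0.
  have fp : 0 < f v by rewrite lt_def fpos ?f0.
  have := expR_ge1Dx (ln (f v / q v)).
  rewrite lnK ?posrE ?divr_gt0 // lnM ?posrE ?invr_gt0 // lnV ?posrE //.
  rewrite ler_pdivlMr // => h.
  have -> : q v * - ln (f v) - q v * - ln (q v) - (q v - f v) =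
    f v - (1 + (ln (f v) - ln (q v))) * q v by ring.
  by rewrite subr_ge0.
have sumd : \sum_v d v = 0.
  apply/eqP; rewrite eq_le sumr_ge0 ?andbT //.
  rewrite /d !sumrB q1 f1 subrr subr0; lra.
move=> v; have h := psumr_eq0P (P:=predT) (fun i _ => d0 i) sumd (i:=v) erefl.
rewrite /d /ent /ce in h.
have [qv0|qn0] := eqVneq (q v) 0.
  by move: h; rewrite qv0 eqxx; lra.
rewrite (negbTE qn0) in h.
have qp : 0 < q v by rewrite lt_def qn0 q0.
have fp : 0 < f v by rewrite lt_def fpos ?f0.
have e : q v * (1 + ln (f v / q v)) = f v.
  rewrite lnM ?posrE ?invr_gt0 // lnV ?posrE //; nra.
have [ly0|lyn0] := eqVneq (ln (f v / q v)) 0.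
  by move: e; rewrite ly0 addr0 mulr1.
have := expR_gt1Dx lyn0; rewrite lnK ?posrE ?divr_gt0 // ltr_pdivlMr // => h2.
by move: e h2; nra.
Qed.


Arguments nlogE {R r}.
Arguments nlog_ge0 {R r}.
Arguments dist_le1 {R T q}.
Arguments gibbs {R V q f}.
Theorem proposition2 (R : realType) (V : finType) (L : nat) (HL : (1 <= L)%N)
  (p : {ffun 'I_L -> V} -> R) (Hp : isdist p)
  (c : R -> R) (alpha : R -> {ffun 'I_L -> option V} -> R)
  (Hc_meas : measurable_fun (`[0%R, 1%R]%classic : set R) c)
  (Halpha_meas : forall z, measurable_fun (`[0%R, 1%R]%classic : set R) (alpha ^~ z))
  (Hc_pos : forall t, 0 <= t <= 1 -> 0 < c t)
  (Halpha01 : forall t z, 0 <= t <= 1 -> 0 <= alpha t z <= 1)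
  (Hnorm : forall t (x0 : {ffun 'I_L -> V}), 0 <= t <= 1 ->
     \sum_(z : {ffun 'I_L -> option V}) c t * alpha t z * (agree x0 z)%:R = 1)
  (fstar : 'I_L -> {ffun 'I_L -> option V} -> V -> R)
  (Hfam : forall i z, isdist (fstar i z))
  (Hmin : forall g : 'I_L -> {ffun 'I_L -> option V} -> V -> R,
     (forall i z, isdist (g i z)) -> (loss p c alpha fstar <= loss p c alpha g)%E)
  (Hfin : (loss p c alpha fstar < +oo)%E) :
  forall (i : 'I_L) (z : {ffun 'I_L -> option V}),
    z i = None -> (0 < marg p c alpha z)%E ->
    (forall v : V,
       fstar i z v =
       fine (\sum_(x : {ffun 'I_L -> V} | x i == v) joint p c alpha x z)%E
         / fine (marg p c alpha z))
    /\
    (forall x : {ffun 'I_L -> V},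
       fine (joint p c alpha x z) / fine (marg p c alpha z) =
       (agree x z)%:R * p x
         / \sum_(y : {ffun 'I_L -> V}) (agree y z)%:R * p y).
Proof.
move=> i0 z0 zi0 mpos.
pose K := (`[0%R, 1%R]%classic : set R).
have mK : measurable K by exact: measurable_itv.
have inK : forall t, K t -> 0 <= t <= 1 by move=> t; rewrite /K /= in_itv.
have [x00 _] : exists x : {ffun 'I_L -> V}, true.
  case: (pickP (@predT {ffun 'I_L -> V})) => [x _|H0]; first by exists x.
  by move: Hp => [_]; rewrite big_pred0 // => /esym/eqP; rewrite oner_eq0.
have ag_ex : forall z : {ffun 'I_L -> option V}, exists x : {ffun 'I_L -> V}, agree x z.
  move=> z; exists [ffun i => odflt (x00 i) (z i)]; apply/forallP => i.
  by apply/implyP; rewrite /um inE ffunE; case: (z i).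
have ca0 : forall t z, K t -> 0 <= c t * alpha t z.
  move=> t z /inK tK; rewrite mulr_ge0 //; first exact: ltW (Hc_pos t tK).
  by case/andP: (Halpha01 t z tK).
have ca1 : forall t z, K t -> c t * alpha t z <= 1.
  move=> t z tK; have [x xz] := ag_ex z.
  rewrite -(Hnorm t x (inK t tK)) (bigD1 z) //= xz mulr1 lerDl.
  by apply: sumr_ge0 => z' _; rewrite mulr_ge0 ?ca0 // ler0n.
have mca : forall z, measurable_fun K (fun t => c t * alpha t z).
  by move=> z; apply: measurable_funM.
pose A z := (\int[lebesgue_measure]_(t in K) (c t * alpha t z)%:E)%E.
have A01 : forall z, (0 <= A z <= 1)%E.
  move=> z; rewrite integral_ge0 /=; last by move=> t tK; rewrite lee_fin ca0.
  apply: (@le_trans _ _ (\int[lebesgue_measure]_(t in K) (cst 1%E) t)%E).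
    apply: ge0_le_integral => //.
    - by move=> t tK; rewrite lee_fin ca0.
    - by apply/measurable_EFinP; exact: mca.
    - by move=> t tK; rewrite lee_fin ca1.
  rewrite integral_cst // mul1e.
  have mu1 := @lebesgue_measure_itv R `[0%R, 1%R]; rewrite /= lte_fin ltr01 oppr0 adde0 in mu1.
  by rewrite le_eqVlt; apply/orP; left; apply/eqP; exact: mu1.
pose a z := fine (A z).
have Aa : forall z, A z = (a z)%:E.
  move=> z; rewrite /a fineK // fin_numElt; have /andP[h1 h2] := A01 z.
  by rewrite (lt_le_trans _ h1) ?ltNy0 // (le_lt_trans h2) ?ltry.
have a0 : forall z, 0 <= a z by move=> z; have /andP[h1 _] := A01 z; rewrite -lee_fin -Aa.
have joint_eq : forall x z, joint p c alpha x z = ((p x * (agree x z)%:R) * a z)%:E.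
  move=> x z; rewrite /joint.
  transitivity (\int[lebesgue_measure]_(t in K)
     ((p x * (agree x z)%:R)%:E * (c t * alpha t z)%:E))%E.
    by apply: eq_integral => t _; rewrite -EFinM; congr EFin; ring.
  rewrite ge0_integralZl_EFin //.
  - by rewrite -/(A z) Aa -EFinM.
  - by move=> t tK; rewrite lee_fin ca0.
  - by apply/measurable_EFinP; exact: mca.
  - by rewrite mulr_ge0 ?ler0n //; case: Hp.
have marg_eq : forall z, marg p c alpha z =
    ((\sum_x p x * (agree x z)%:R) * a z)%:E.
  by move=> z; rewrite /marg; under eq_bigr do rewrite joint_eq; rewrite sumEFin mulr_suml.
pose W := \sum_(x : {ffun 'I_L -> V}) p x * (agree x z0)%:R.
have W0 : 0 <= W by apply: sumr_ge0 => x _; rewrite mulr_ge0 ?ler0n //; case: Hp.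
have Wa : 0 < W * a z0 by move: mpos; rewrite marg_eq lte_fin.
have Wp : 0 < W.
  by rewrite lt_def W0 andbT; apply/eqP => W0'; move: Wa; rewrite W0' mul0r ltxx.
have ap : 0 < a z0.
  by rewrite lt_def a0 andbT; apply/eqP => a0'; move: Wa; rewrite a0' mulr0 ltxx.
pose q := fun v => (\sum_(x : {ffun 'I_L -> V} | x i0 == v) p x * (agree x z0)%:R) / W.
suff Hq : forall v, fstar i0 z0 v = q v.
  split.
    move=> v; rewrite Hq marg_eq /=; under eq_bigr do rewrite joint_eq.
    rewrite sumEFin /= -mulr_suml /q -/W; field.
    by rewrite (gt_eqF Wp) (gt_eqF ap).
  move=> x; rewrite joint_eq marg_eq /= -/W.
  have -> : \sum_y (agree y z0)%:R * p y = W by apply: eq_bigr => y _; rewrite mulrC.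
  field; by rewrite (gt_eqF Wp) (gt_eqF ap).
pose g := fun i z => if (i == i0) && (z == z0) then q else fstar i z.
pose h := fun i z => if (i == i0) && (z == z0) then (fun _ : V => 1) else fstar i z.
have fs1 : forall i z v, fstar i z v <= 1 by move=> i z; exact: dist_le1 (Hfam i z).
have part : forall F : {ffun 'I_L -> V} -> R,
    \sum_v \sum_(x : {ffun 'I_L -> V} | x i0 == v) F x = \sum_x F x.
  by move=> F; rewrite [RHS](partition_big (fun x : {ffun 'I_L -> V} => x i0) predT).
have qd : isdist q.
  split => [v|].
    rewrite /q divr_ge0 // sumr_ge0 // => x _; rewrite mulr_ge0 ?ler0n //; by case: Hp.
  by rewrite /q -mulr_suml part divff // gt_eqF.
have gd : forall i z, isdist (g i z) by move=> i z; rewrite /g; case: ifP.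
pose Fint (f : 'I_L -> {ffun 'I_L -> option V} -> V -> R) (t : R) : \bar R :=
  (\sum_(x : {ffun 'I_L -> V}) \sum_(z : {ffun 'I_L -> option V})
     ((p x * c t * alpha t z * (agree x z)%:R)%:E *
      ((t^-1)%:E * \sum_(i < L | z i == None) nlog (f i z (x i)))))%E.
pose b t := c t * alpha t z0 * t^-1.
pose S (phi : V -> R) : \bar R := (\sum_(x : {ffun 'I_L -> V})
   (p x * (agree x z0)%:R)%:E * nlog (phi (x i0)))%E.
have ti0 : forall t, K t -> 0 <= t^-1 by move=> t /inK /andP[t0 _]; rewrite invr_ge0.
have px0 : forall x, 0 <= p x by case: Hp.
have decomp : forall f : 'I_L -> {ffun 'I_L -> option V} -> V -> R,
   (forall i z, ~~ ((i == i0) && (z == z0)) -> f i z = fstar i z) ->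
   (forall i z v, f i z v <= 1) ->
   forall t, K t -> Fint f t = (Fint h t + (b t)%:E * S (f i0 z0))%E.
  move=> f Hf f1 t tK.
  have h1 : forall i z v, h i z v <= 1 by move=> i z v; rewrite /h; case: ifP.
  rewrite /Fint /S ge0_sume_distrr; last first.
    by move=> x _; rewrite mule_ge0 ?nlog_ge0 // lee_fin mulr_ge0 ?ler0n.
  rewrite -big_split /=; apply: eq_bigr => x _.
  rewrite (bigD1 z0) // [in RHS](bigD1 z0) //=.
  have -> : (\sum_(z | z != z0) ((p x * c t * alpha t z * (agree x z)%:R)%:E *
      ((t^-1)%:E * \sum_(i < L | z i == None) nlog (f i z (x i)))) =
      \sum_(z | z != z0) ((p x * c t * alpha t z * (agree x z)%:R)%:E *
      ((t^-1)%:E * \sum_(i < L | z i == None) nlog (h i z (x i)))))%E.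
    apply: eq_bigr => z zz0; congr (_ * (_ * _))%E; apply: eq_bigr => i _.
    by rewrite Hf ?(negbTE zz0) ?andbF // /h (negbTE zz0) andbF.
  rewrite addeAC; congr (_ + _)%E.
  rewrite (bigD1 i0) ?zi0 //= [in RHS](bigD1 i0) ?zi0 //=.
  have hE : h i0 z0 = (fun _ => 1) by rewrite /h !eqxx.
  rewrite hE (nlogE (oner_neq0 R)) ln1 oppr0 add0e.
  have -> : (\sum_(i < L | (z0 i == None) && (i != i0)) nlog (f i z0 (x i)) =
      \sum_(i < L | (z0 i == None) && (i != i0)) nlog (h i z0 (x i)))%E.
    apply: eq_bigr => i /andP[_ ii0].
    by rewrite Hf ?(negbTE ii0) // /h (negbTE ii0).
  rewrite ge0_muleDr ?nlog_ge0 //; last by apply: sume_ge0 => i _; exact: nlog_ge0.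
  rewrite ge0_muleDr; last 2 first.
  - by rewrite mule_ge0 ?lee_fin ?ti0 ?nlog_ge0.
  - by rewrite mule_ge0 ?lee_fin ?ti0 // sume_ge0 // => i _; exact: nlog_ge0.
  rewrite addeC; congr (_ + _)%E.
  by rewrite !muleA -!EFinM /b; congr (_%:E * _)%E; ring.
have minv : measurable_fun K (fun t : R => t^-1).
  apply: (eq_measurable_fun (fun t : R => t `^ (-1))).
    by move=> t /set_mem /inK /andP[t0 _]; exact: powR_inv1.
  by apply: measurable_funTS; exact: measurable_powR.
have mFint : forall f, measurable_fun K (fun t => Fint f t).
  move=> f; apply: emeasurable_sum => x; apply: emeasurable_sum => z.
  apply: emeasurable_funM.
    apply/measurable_EFinP.
    apply: measurable_funM => //.
    apply: measurable_funM => //.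
    by apply: measurable_funM.
  apply: emeasurable_funM; last exact: measurable_cst.
  by apply/measurable_EFinP.
have mb : measurable_fun K (fun t => (b t)%:E).
  apply/measurable_EFinP.
  by apply: measurable_funM => //; exact: mca.
have Fint0 : forall f, (forall i z v, f i z v <= 1) -> forall t, K t -> (0 <= Fint f t)%E.
  move=> f f1 t tK; apply: sume_ge0 => x _; apply: sume_ge0 => z _.
  apply: mule_ge0.
    rewrite lee_fin -(mulrA (p x)).
    by apply: mulr_ge0; [apply: mulr_ge0; [exact: px0 | exact: ca0] | exact: ler0n].
  apply: mule_ge0; first by rewrite lee_fin ti0.
  by apply: sume_ge0 => i _; exact: nlog_ge0.
have b0 : forall t, K t -> 0 <= b t by move=> t tK; rewrite /b mulr_ge0 ?ca0 ?ti0.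
pose B := (\int[lebesgue_measure]_(t in K) (b t)%:E)%E.
pose H := (\int[lebesgue_measure]_(t in K) Fint h t)%E.
have h1 : forall i z v, h i z v <= 1 by move=> i z v; rewrite /h; case: ifP.
have Sf1 : forall phi : V -> R, (forall v, phi v <= 1) -> (0 <= S phi)%E.
  move=> phi phi1; apply: sume_ge0 => x _.
  by rewrite mule_ge0 ?nlog_ge0 // lee_fin mulr_ge0 ?ler0n.
have lossD : forall f : 'I_L -> {ffun 'I_L -> option V} -> V -> R,
   (forall i z, ~~ ((i == i0) && (z == z0)) -> f i z = fstar i z) ->
   (forall i z v, f i z v <= 1) ->
   loss p c alpha f = (H + B * S (f i0 z0))%E.
  move=> f Hf f1.
  transitivity (\int[lebesgue_measure]_(t in K) Fint f t)%E; first by [].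
  transitivity (\int[lebesgue_measure]_(t in K) (Fint h t + (b t)%:E * S (f i0 z0)))%E.
    by apply: eq_integral => t /set_mem tK; exact: decomp.
  rewrite ge0_integralD //; first by rewrite ge0_integralZr ?Sf1 // => t tK; rewrite lee_fin b0.
  all: try exact: Fint0.
  all: try exact: mFint.
    move=> t tK; apply: mule_ge0; first by rewrite lee_fin; exact: b0.
    by apply: Sf1; exact: (f1 i0 z0).
  by apply: emeasurable_funM => //; exact: measurable_cst.
have gE : g i0 z0 = q by rewrite /g !eqxx.
have g1 : forall i z v, g i z v <= 1.
  by move=> i z v; rewrite /g; case: ifP => _; [exact: (dist_le1 qd) | exact: fs1].
have LF := lossD fstar (fun i z _ => erefl) fs1.
have LG := lossD g (fun i z ne => ifN _ _ ne) g1.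
have Hle := Hmin g gd; rewrite LF LG gE in Hle.
rewrite LF in Hfin.
have H0 : (0 <= H)%E by apply: integral_ge0 => t tK; exact: Fint0.
have B0 : (0 <= B)%E by apply: integral_ge0 => t tK; rewrite lee_fin b0.
have Sf0 := Sf1 _ (fs1 i0 z0).
have Sq0 := Sf1 _ (dist_le1 qd).
have Hfn : H \is a fin_num.
  rewrite fin_numElt (lt_le_trans ltNy0 H0) /=; apply: le_lt_trans Hfin.
  by apply: leeDl; exact: mule_ge0.
move: Hle; rewrite leeD2lE // => Hle.
have BS : (B * S (fstar i0 z0) < +oo)%E.
  by apply: le_lt_trans Hfin; apply: leeDr.
have sub : (`]0%R, 1%R]%classic `<=` K)%classic.
  move=> t; rewrite /= in_itv /= => /andP[t0 t1].
  by rewrite /K /= in_itv /= t1 andbT; exact: ltW.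
have AB : (A z0 <= B)%E.
  rewrite /A /B /K.
  rewrite -(@integral_itv_obnd_cbnd R 0 (BRight 1) (fun t => (c t * alpha t z0)%:E)); last first.
    have mcaE : measurable_fun K (fun t => (c t * alpha t z0)%:E).
      by apply/measurable_EFinP; exact: mca.
    by apply/emeasurable_fun_itv_obnd_cbndP; exact: mcaE.
  rewrite -(@integral_itv_obnd_cbnd R 0 (BRight 1) (fun t => (b t)%:E)); last first.
    by apply/emeasurable_fun_itv_obnd_cbndP; exact: mb.
  apply: ge0_le_integral => //.
  - by move=> t tt; have tK := sub t tt; rewrite lee_fin ca0.
  - apply/emeasurable_fun_itv_obnd_cbndP.
    by apply/measurable_EFinP; exact: mca.
  - by apply/emeasurable_fun_itv_obnd_cbndP; exact: mb.
  move=> t tt; have tK := sub t tt.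
  have : t \in `]0%R, 1%R] by exact: tt.
  rewrite in_itv /= => /andP[t0 t1].
  rewrite lee_fin /b -{1}(mulr1 (c t * alpha t z0)) ler_wpM2l ?ca0 //.
  by rewrite invf_ge1.
have Bpos : (0 < B)%E by apply: lt_le_trans AB; rewrite Aa lte_fin.
have SqS : (S (fstar i0 z0) <= S q)%E.
  have key : forall B' : \bar R, (0 < B')%E ->
      (B' * S (fstar i0 z0) <= B' * S q)%E -> (B' * S (fstar i0 z0) < +oo)%E ->
      (S (fstar i0 z0) <= S q)%E; last exact: key Bpos Hle BS.
  case => [beta| |] //.
    by move=> bp; rewrite lee_pmul2l.
  move=> _ _; have [->|Sn0] := eqVneq (S (fstar i0 z0)) 0%E; first by [].
  by rewrite gt0_mulye ?ltxx // lt_def Sn0 Sf0.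
have SE : forall phi : V -> R, (forall v, phi v <= 1) ->
    S phi = (W%:E * \sum_v (q v)%:E * nlog (phi v))%E.
  move=> phi phi1; rewrite /S.
  rewrite (partition_big (fun x : {ffun 'I_L -> V} => x i0) predT) //=.
  rewrite ge0_sume_distrr; last first.
    move=> v _; apply: mule_ge0; last exact: nlog_ge0.
    by rewrite lee_fin; case: qd.
  apply: eq_bigr => v _.
  transitivity (\sum_(x : {ffun 'I_L -> V} | x i0 == v)
     (p x * (agree x z0)%:R)%:E * nlog (phi v))%E.
    by apply: eq_bigr => x /eqP ->.
  rewrite -ge0_sume_distrl; last by move=> x _; rewrite lee_fin mulr_ge0 ?ler0n.
  rewrite sumEFin muleA -EFinM /q; congr (_%:E * _)%E.
  by field; rewrite gt_eqF.
move: SqS; rewrite !SE ?lee_pmul2l ?lte_fin //; last exact: (dist_le1 qd).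
move=> SqS.
by move=> v; exact: (gibbs qd (Hfam i0 z0) SqS v).
Qed.
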